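(* Consider the following permutation model $\mathcal V$ (in $\mathsf{ZFA}$ with choice in the ground). Let $A_0$ be an arbitrary infinite set and $G_0$ the group of all permutations of $A_0$. Recursively, let $A_{n+1}=A_n\cup\{(n+1,p,\varepsilon): p\in\bigcup_{k=0}^{n+1}A_n^k,\ \varepsilon\in\{0,1\}\}$, and let $G_{n+1}$ be the group of all permutations $\sigma$ of $A_{n+1}$ for which there exist $\pi_\sigma\in G_n$ and bits $\varepsilon_{\sigma,p}\in\{0,1\}$ (for $p\in\bigcup_{k=0}^{n+1}A_n^k$) with $\sigma(x)=\pi_\sigma(x)$ for $x\in A_n$ and $\sigma((n+1,p,\varepsilon))=(n+1,\pi_\sigma(p),\varepsilon_{\sigma,p}+_2\varepsilon)$, where $\pi_\sigma(\langle p_0,\dots,p_{l-1}\rangle)=\langle\pi_\sigma(p_0),\dots,\pi_\sigma(p_{l-1})\rangle$ and $+_2$ is addition mod 2. Let $A=\bigcup_{n\in\omega}A_n$ be the set of atoms, $G=\{H\in\mathrm{Aut}(A):\forall n\in\omega\ (H\restriction A_n\in G_n)\}$, and let $\mathcal V$ be the class of hereditarily symmetric sets with respect to finite supports. Let $\mathfrak m=|A|$. Then in $\mathcal V$: $$\mathfrak m^2<\mathrm{seq}^{1-1}(\mathfrak m)<[\mathfrak m]^2<\mathrm{fin}(\mathfrak m).$$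
   Context: $\mathrm{Aut}(A)$ is the group of all permutations of $A$. Permutation model: $\pi\in G$ acts on sets by $\pi x=\{\pi y:y\in x\}$; $\mathrm{Fix}_G(E)=\{\pi\in G:\pi a=a\ \forall a\in E\}$; a set $x$ is symmetric if for some finite $E\subseteq A$ (a support), every $\pi\in\mathrm{Fix}_G(E)$ satisfies $\pi x=x$; $\mathcal V$ is the class of hereditarily symmetric sets. For a set $M$: $M^2=M\times M$, $[M]^2$ = 2-element subsets, $\mathrm{seq}^{1-1}(M)$ = finite sequences without repetition, $\mathrm{fin}(M)$ = finite subsets; for $\mathfrak m=|M|$ the corresponding symbols denote cardinalities. $|X|<|Y|$ means an injection $X\to Y$ exists but no bijection. *)

(* Defs.v *)
From Stdlib Require Import List Bool Arith.
Import ListNotations.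
Set Implicit Arguments.

Section Model.
Variable A0 : Type.

(* Atoms: [base x] is x in A_0; [lev m p e] is the triple (m, p, e). *)
Inductive atom : Type :=
| base : A0 -> atom
| lev : nat -> list atom -> bool -> atom.

Fixpoint inA (n : nat) (a : atom) : Prop :=
  match n with
  | 0 => exists x, a = base x
  | S m => inA m a \/
           exists p e, a = lev (S m) p e /\ length p <= S m /\ Forall (inA m) p
  end.

Definition inAll (a : atom) : Prop := exists n, inA n a.

Definition perm_on (S : atom -> Prop) (s : atom -> atom) : Prop :=
  (forall x, S x -> S (s x)) /\
  (forall x y, S x -> S y -> s x = s y -> x = y) /\
  (forall y, S y -> exists x, S x /\ s x = y).

Fixpoint inG (n : nat) (s : atom -> atom) : Prop :=
  match n with
  | 0 => perm_on (inA 0) s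
  | S m => perm_on (inA (S m)) s /\
      exists pi : atom -> atom, inG m pi /\
        (forall x, inA m x -> s x = pi x) /\
        exists eps : list atom -> bool,
          forall (p : list atom) (e : bool), length p <= S m -> Forall (inA m) p ->
            s (lev (S m) p e) = lev (S m) (map pi p) (xorb (eps p) e)
  end.

Definition inGfull (H : atom -> atom) : Prop :=
  perm_on inAll H /\ forall n, inG n H.

Definition fixes (E : list atom) (pi : atom -> atom) : Prop :=
  forall a, In a E -> pi a = a.

(* An injection X -> Y exists in V: a function which is equivariant under
   Fix_G(E) for some finite support E included in A. *)
Definition V_inj {X Y : Type} (memX : X -> Prop) (actX : (atom -> atom) -> X -> X)
    (memY : Y -> Prop) (actY : (atom -> atom) -> Y -> Y) : Prop :=
  exists (f : X -> Y) (E : list atom),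
    Forall inAll E /\
    (forall x, memX x -> memY (f x)) /\
    (forall x y, memX x -> memX y -> f x = f y -> x = y) /\
    (forall pi, inGfull pi -> fixes E pi ->
       forall x, memX x -> f (actX pi x) = actY pi (f x)).

Definition V_bij {X Y : Type} (memX : X -> Prop) (actX : (atom -> atom) -> X -> X)
    (memY : Y -> Prop) (actY : (atom -> atom) -> Y -> Y) : Prop :=
  exists (f : X -> Y) (E : list atom),
    Forall inAll E /\
    (forall x, memX x -> memY (f x)) /\
    (forall x y, memX x -> memX y -> f x = f y -> x = y) /\
    (forall y, memY y -> exists x, memX x /\ f x = y) /\
    (forall pi, inGfull pi -> fixes E pi ->
       forall x, memX x -> f (actX pi x) = actY pi (f x)).

Definition V_lt {X Y : Type} (memX : X -> Prop) (actX : (atom -> atom) -> X -> X)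
    (memY : Y -> Prop) (actY : (atom -> atom) -> Y -> Y) : Prop :=
  V_inj memX actX memY actY /\ ~ V_bij memX actX memY actY.

Definition sq_mem (q : atom * atom) : Prop := inAll (fst q) /\ inAll (snd q).
Definition sq_act (pi : atom -> atom) (q : atom * atom) : atom * atom :=
  (pi (fst q), pi (snd q)).

Definition seq_mem (l : list atom) : Prop := Forall inAll l /\ NoDup l.
Definition seq_act (pi : atom -> atom) (l : list atom) : list atom := map pi l.

Definition set_act (pi : atom -> atom) (S : atom -> Prop) : atom -> Prop :=
  fun b => exists y, S y /\ pi y = b.

Definition pair_mem (S : atom -> Prop) : Prop :=
  (forall x, S x -> inAll x) /\
  exists a b, a <> b /\ forall x, S x <-> (x = a \/ x = b).

Definition fin_mem (S : atom -> Prop) : Prop :=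
  (forall x, S x -> inAll x) /\ exists l : list atom, forall x, S x <-> In x l.

End Model.

(* Main.v *)
Require Import Defs.
From Stdlib Require Import List Bool Arith Lia.
From Stdlib Require Import Classical ClassicalEpsilon FunctionalExtensionality PropExtensionality.
Import ListNotations.


Section S.
Variable A0 : Type.
Local Notation At := (atom A0).

Definition atom_ind' (P : At -> Prop) (Hb : forall z, P (base z))
  (Hl : forall m p e, Forall P p -> P (lev m p e)) : forall a, P a :=
  fix F a := match a with
  | base z => Hb z
  | lev m p e => Hl m p e ((fix G l := match l return Forall P l with
                   | [] => Forall_nil _ | x :: l' => Forall_cons _ (F x) (G l') end) p)
  end.

Fixpoint Pi (s : A0 -> A0) (F : nat -> list At -> bool) (a : At) : At :=
  match a with
  | base z => base (s z)
  | lev m p e => lev m (map (Pi s F) p) (xorb (F m p) e)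
  end.

Fixpoint subs (a : At) : list At :=
  match a with
  | base z => [a]
  | lev m p e => a :: flat_map subs p
  end.

Lemma subs_self a : In a (subs a).
Proof. destruct a; simpl; auto. Qed.

Lemma subs_trans : forall y u, In u (subs y) -> incl (subs u) (subs y).
Proof.
  induction y using atom_ind'; simpl; intros u Hu.
  - destruct Hu as [<-|[]]; simpl; apply incl_refl.
  - destruct Hu as [<-|Hu]. apply incl_refl.
    apply in_flat_map in Hu as [x [Hx Hu]].
    rewrite Forall_forall in H. specialize (H x Hx u Hu).
    intros w Hw. right. apply in_flat_map. exists x; auto.
Qed.

Lemma subs_comp m p e x : In x p -> incl (subs x) (subs (lev m p e)).
Proof. intros Hx w Hw. simpl. right. apply in_flat_map; eauto. Qed.

Definition good (s : A0 -> A0) (F : nat -> list At -> bool) (u : At) : Prop :=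
  match u with base z => s z = z | lev m p e => F m p = false end.

Lemma map_fixed (f : At -> At) p : map f p = p -> forall x, In x p -> f x = x.
Proof.
  induction p; simpl; intros H x Hx; [easy|]. injection H as H1 H2.
  destruct Hx as [<-|Hx]; auto.
Qed.

Lemma Pi_fix s F : forall y, (forall u, In u (subs y) -> good s F u) -> Pi s F y = y.
Proof.
  induction y using atom_ind'; simpl; intros Hg.
  - f_equal. apply (Hg (base z)); auto.
  - assert (HF : F m p = false) by (apply (Hg (lev m p e)); auto).
    rewrite HF. simpl. f_equal.
    rewrite Forall_forall in H.
    rewrite <- (map_id p) at 2. apply map_ext_in. intros x Hx. apply H; auto.
    intros u Hu. apply Hg. right. apply in_flat_map; eauto.
Qed.

Lemma Pi_fixed_good s F : forall y, Pi s F y = y -> forall u, In u (subs y) -> good s F u.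
Proof.
  induction y using atom_ind'; simpl; intros Hy u Hu.
  - destruct Hu as [<-|[]]. injection Hy; auto.
  - injection Hy as H1 H2.
    destruct Hu as [<-|Hu]. simpl. destruct (F m p), e; simpl in *; congruence.
    apply in_flat_map in Hu as [x [Hx Hu]].
    rewrite Forall_forall in H. apply (H x Hx); auto. apply (map_fixed _ _ H1); auto.
Qed.

Lemma inA_lev n m (p : list At) e : inA n (lev m p e) ->
  exists k, m = S k /\ k < n /\ length p <= S k /\ Forall (inA k) p.
Proof.
  induction n; simpl.
  - intros [x Hx]; discriminate.
  - intros [H|[p' [e' [Heq [Hl Hf]]]]].
    + destruct (IHn H) as [k Hk]. exists k; intuition lia.
    + injection Heq as -> -> ->. exists n; intuition lia.
Qed.

Section PiG.
Variables (s t : A0 -> A0) (F : nat -> list At -> bool).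
Hypothesis st : forall z, s (t z) = z.
Hypothesis ts : forall z, t (s z) = z.

Lemma Pi_inA : forall n a, inA n a -> inA n (Pi s F a).
Proof.
  induction n; simpl.
  - intros a [x ->]. simpl. eauto.
  - intros a [H|[p [e [-> [Hl Hf]]]]]. left; auto.
    right. simpl. exists (map (Pi s F) p), (xorb (F (S n) p) e). split; auto.
    rewrite length_map. split; auto. apply Forall_map. eapply Forall_impl; eauto.
Qed.

Lemma map_inj (f : At -> At) : forall p q,
  Forall (fun x => forall y, f x = f y -> x = y) p -> map f p = map f q -> p = q.
Proof.
  induction p; destruct q; simpl; intros H E; try discriminate; auto.
  inversion H; subst. injection E as E1 E2. f_equal; auto.
Qed.

Lemma Pi_inj : forall a b, Pi s F a = Pi s F b -> a = b.
Proof.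
  induction a using atom_ind'; destruct b; simpl; intros E; try discriminate.
  - injection E as E. rewrite <- (ts z), <- (ts a), E; auto.
  - injection E as E1 E2 E3. subst n.
    assert (p = l) by (apply (map_inj _ _ _ H E2)). subst l.
    f_equal. destruct (F m p), e, b; simpl in *; congruence.
Qed.

Lemma Pi_surj : forall n y, inA n y -> exists x, inA n x /\ Pi s F x = y.
Proof.
  induction n; simpl.
  - intros y [z ->]. exists (base (t z)). simpl. rewrite st. eauto.
  - intros y [H|[q [e [-> [Hl Hf]]]]].
    + destruct (IHn _ H) as [x [Hx Ex]]. eauto.
    + assert (exists p, Forall (inA n) p /\ map (Pi s F) p = q) as [p [Hp Ep]].
      { clear Hl. induction q as [|y q IHq]. exists []; auto.
        inversion Hf; subst. destruct (IHq H2) as [p [Hp Ep]].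
        destruct (IHn _ H1) as [x [Hx Ex]]. exists (x :: p). simpl; split; auto. congruence. }
      exists (lev (S n) p (xorb (F (S n) p) e)). split.
      * right. do 2 eexists. split; [reflexivity|]. split; auto.
        subst q. rewrite length_map in Hl. auto.
      * simpl. rewrite Ep. f_equal. destruct (F (S n) p), e; reflexivity.
Qed.

Lemma Pi_inG : forall n, inG n (Pi s F).
Proof.
  assert (P : forall n, perm_on (inA n) (Pi s F)).
  { intros n. split; [|split]. apply Pi_inA. intros; apply Pi_inj; auto. apply Pi_surj. }
  induction n. apply (P 0). simpl.
  split. apply (P (S n)). exists (Pi s F). split; auto. split; auto.
  exists (F (S n)). intros; reflexivity.
Qed.

Lemma Pi_G : inGfull (Pi s F).
Proof.
  split; [|apply Pi_inG].
  split; [|split].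
  - intros x [n H]. exists n. apply Pi_inA; auto.
  - intros; apply Pi_inj; auto.
  - intros y [n H]. destruct (@Pi_surj n y H) as [x [Hx E]]. exists x; split; auto. exists n; auto.
Qed.
End PiG.


Lemma pext (S T : At -> Prop) : (forall x, S x <-> T x) -> S = T.
Proof. intros H. apply functional_extensionality; intros x. apply propositional_extensionality; auto. Qed.

Definition occ n (y : At) := exists e, In (lev n [] e) (subs y).
Definition leafF (P : nat -> bool) : nat -> list At -> bool :=
  fun m p => match p with [] => P m | _ => false end.
Definition lflip P := Pi id (leafF P).
Definition flipF m (p : list At) : nat -> list At -> bool :=
  fun m' p' => if excluded_middle_informative (m' = m /\ p' = p) then true else false.
Definition flip m p := Pi id (flipF m p).

Lemma lflip_G P : inGfull (lflip P).
Proof. apply (@Pi_G id id); auto. Qed.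
Lemma flip_G m p : inGfull (flip m p).
Proof. apply (@Pi_G id id); auto. Qed.

Lemma lflip_fix P y : (forall n, P n = true -> ~ occ n y) -> lflip P y = y.
Proof.
  intros H. apply Pi_fix. intros [z|m p e] Hu; simpl; auto.
  destruct p; auto. destruct (P m) eqn:E; auto. exfalso. apply (H m E). exists e; auto.
Qed.

Lemma lflip_fixed P y n : lflip P y = y -> P n = true -> ~ occ n y.
Proof.
  intros H Hn [e He]. pose proof (Pi_fixed_good _ _ _ H _ He) as G. simpl in G. congruence.
Qed.

Lemma lflip_leaf P n e : lflip P (lev n [] e) = lev n [] (xorb (P n) e).
Proof. reflexivity. Qed.

Lemma lflip_lev P m p e : p <> [] -> lflip P (lev m p e) = lev m (map (lflip P) p) e.
Proof. intros Hp. unfold lflip. simpl. destruct p; [congruence|]. reflexivity. Qed.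

Lemma flip_lev m p e : flip m p (lev m p e) = lev m (map (flip m p) p) (negb e).
Proof.
  unfold flip. simpl. unfold flipF at 2.
  destruct (excluded_middle_informative (m = m /\ p = p)) as [_|C]; [|tauto]. reflexivity.
Qed.

Lemma flip_any m p N q e : flip m p (lev N q e) = lev N (map (flip m p) q) (xorb (flipF m p N q) e).
Proof. reflexivity. Qed.

Lemma flip_leaf m p n e : p <> [] -> flip m p (lev n [] e) = lev n [] e.
Proof.
  intros Hp. unfold flip. simpl. unfold flipF.
  destruct (excluded_middle_informative (n = m /\ [] = p)) as [[_ C]|_]; [congruence|]. reflexivity.
Qed.

Lemma occ_base n z : ~ occ n (base z).
Proof. intros [e [H|[]]]. discriminate. Qed.

Lemma occ_leaf n m e : occ n (lev m [] e) -> n = m.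
Proof. intros [e' [H|[]]]. injection H; auto. Qed.

Lemma occ_comp n m p e : p <> [] -> occ n (lev m p e) -> exists x, In x p /\ occ n x.
Proof.
  intros Hp [e' [H|H]]. injection H; intros; subst; congruence.
  apply in_flat_map in H as [x [Hx H]]. exists x; split; auto. exists e'; auto.
Qed.

Lemma occ_sub n y u : In u (subs y) -> occ n u -> occ n y.
Proof. intros H [e He]. exists e. apply (subs_trans _ _ H); auto. Qed.

Lemma occ_up n m p e x : In x p -> occ n x -> occ n (lev m p e).
Proof. intros Hx [e' He]. exists e'. apply (@subs_comp m p e x Hx); auto. Qed.

Lemma flip_fix_fresh n m p e y : p <> [] -> occ n (lev m p e) -> ~ occ n y -> flip m p y = y.
Proof.
  intros Hp Ho Hy. apply Pi_fix. intros [z|m' p' e'] Hu; simpl; auto.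
  unfold flipF. destruct (excluded_middle_informative (m' = m /\ p' = p)) as [[-> ->]|]; auto.
  exfalso. apply Hy. apply (@occ_sub n y _ Hu).
  destruct (occ_comp _ _ _ _ Hp Ho) as [x [Hx Hox]]. eapply occ_up; eauto.
Qed.

Lemma G_A pi (a : At) : inGfull pi -> inAll a -> inAll (pi a).
Proof. intros [[H _] _]; auto. Qed.

Lemma G_inj pi (a b : At) : inGfull pi -> inAll a -> inAll b -> pi a = pi b -> a = b.
Proof. intros [[_ [H _]] _]; eauto. Qed.

Lemma G_lev pi n m (p : list At) e : inGfull pi -> inA n (lev m p e) ->
  exists b, forall e', pi (lev m p e') = lev m (map pi p) (xorb b e').
Proof.
  intros [_ HG] H. destruct (inA_lev _ _ _ _ H) as [k [-> [_ [Hl Hf]]]].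
  destruct (HG (S k)) as [_ [pi' [_ [Hag [eps Heq]]]]].
  exists (eps p). intros e'. rewrite Heq; auto. f_equal.
  apply map_ext_in. intros x Hx. rewrite Forall_forall in Hf. symmetry; auto.
Qed.


Lemma inA_mono : forall k k' (a : At), k <= k' -> inA k a -> inA k' a.
Proof. intros k k' a H. induction H; auto. intros Ha. simpl. left; auto. Qed.

Lemma leaf_A k e : inA (S k) (lev (S k) ([] : list At) e).
Proof. simpl. right. exists [], e. split; [reflexivity|]. split; [simpl; lia|constructor]. Qed.

Lemma set_act_ext pi (Q : At -> Prop) a b : (forall x, Q x <-> x = a \/ x = b) ->
  forall x, set_act pi Q x <-> x = pi a \/ x = pi b.
Proof.
  intros HQ x. unfold set_act. split.
  - intros [y [Hy <-]]. apply HQ in Hy as [->| ->]; auto.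
  - intros [-> | ->]; eexists; split; try reflexivity; apply HQ; auto.
Qed.

Lemma pair_pres pi (Q : At -> Prop) : inGfull pi -> pair_mem Q -> pair_mem (set_act pi Q).
Proof.
  intros HG [HA [a [b [Hab HQ]]]]. split.
  - intros x [y [Hy <-]]. apply G_A; auto.
  - exists (pi a), (pi b). split.
    + intros E. apply Hab. apply (G_inj pi); auto; apply HA, HQ; auto.
    + apply set_act_ext; auto.
Qed.

Definition Xs N (q1 q2 : list At) : At -> Prop :=
  fun x => exists e, x = lev N q1 e \/ x = lev N q2 e.

Lemma Xs_pres pi N q1 q2 :
  (exists b, forall e, pi (lev N q1 e) = lev N q1 (xorb b e)) ->
  (exists b, forall e, pi (lev N q2 e) = lev N q2 (xorb b e)) ->
  set_act pi (Xs N q1 q2) = Xs N q1 q2.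
Proof.
  intros [b1 H1] [b2 H2]. apply pext. intros x. unfold set_act, Xs. split.
  - intros [y [[e [-> | ->]] <-]]. rewrite H1; eauto. rewrite H2; eauto.
  - intros [e [-> | ->]].
    + exists (lev N q1 (xorb b1 e)). split. eauto. rewrite H1. f_equal. destruct b1, e; auto.
    + exists (lev N q2 (xorb b2 e)). split. eauto. rewrite H2. f_equal. destruct b2, e; auto.
Qed.

Lemma Xs_swap pi N q1 q2 :
  (forall e, pi (lev N q1 e) = lev N q2 e) ->
  (forall e, pi (lev N q2 e) = lev N q1 e) ->
  set_act pi (Xs N q1 q2) = Xs N q1 q2.
Proof.
  intros H1 H2. apply pext. intros x. unfold set_act, Xs. split.
  - intros [y [[e [-> | ->]] <-]]. rewrite H1; eauto. rewrite H2; eauto.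
  - intros [e [-> | ->]].
    + exists (lev N q2 e). split; eauto.
    + exists (lev N q1 e). split; eauto.
Qed.

Lemma N3core (f : (At -> Prop) -> (At -> Prop)) (E : list At) n1 n2 N
  (Hn : n1 <> n2)
  (Hinj : forall x y, pair_mem x -> pair_mem y -> f x = f y -> x = y)
  (Heqv : forall pi, inGfull pi -> fixes E pi -> forall x, pair_mem x -> f (set_act pi x) = set_act pi (f x))
  (Hfr : forall y, In y E -> ~ occ n1 y /\ ~ occ n2 y)
  (Q : At -> Prop) (HQ : pair_mem Q)
  (EQ : f Q = Xs N [lev n1 [] false; lev n2 [] false] [lev n1 [] true; lev n2 [] true]) : False.
Proof.
  set (X := Xs N [lev n1 [] false; lev n2 [] false] [lev n1 [] true; lev n2 [] true]) in *.
  assert (key : forall pi, inGfull pi -> fixes E pi -> set_act pi X = X -> set_act pi Q = Q).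
  { intros pi HG HF HX. apply Hinj; auto. apply pair_pres; auto. rewrite Heqv, EQ; auto. }
  assert (back : forall pi, inGfull pi -> fixes E pi -> set_act pi Q = Q -> set_act pi X = X).
  { intros pi HG HF HQQ. rewrite <- EQ, <- Heqv; auto. rewrite HQQ; auto. }
  set (g1 := lflip (Nat.eqb n1)).
  set (h := lflip (fun m => (n1 =? m) || (n2 =? m))).
  assert (E11 : (n1 =? n1) = true) by apply Nat.eqb_refl.
  assert (E22 : (n2 =? n2) = true) by apply Nat.eqb_refl.
  assert (E12 : (n1 =? n2) = false) by (apply Nat.eqb_neq; auto).
  assert (E21 : (n2 =? n1) = false) by (apply Nat.eqb_neq; auto).
  assert (g1E : fixes E g1).
  { intros y Hy. apply lflip_fix. intros n Hn1. apply Nat.eqb_eq in Hn1. subst n. apply Hfr; auto. }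
  assert (hE : fixes E h).
  { intros y Hy. apply lflip_fix. intros n Hn1. apply orb_true_iff in Hn1 as [H|H];
    apply Nat.eqb_eq in H; subst n; apply Hfr; auto. }
  assert (g1X : set_act g1 X <> X).
  { intros C. assert (HX : X (lev N [lev n1 [] true; lev n2 [] false] false)).
    { rewrite <- C. exists (lev N [lev n1 [] false; lev n2 [] false] false). split.
      exists false; auto. unfold g1, lflip. simpl. rewrite E11, E12. reflexivity. }
    destruct HX as [e [H|H]]; injection H; intros; discriminate. }
  assert (hX : set_act h X = X).
  { apply Xs_swap; intros e; unfold h, lflip; simpl; rewrite E11, E22, E12, E21; reflexivity. }
  assert (hQ : set_act h Q = Q) by (apply key; auto; apply lflip_G).
  destruct HQ as [HQA [a0 [b0 [Hab0 HQab]]]].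
  assert (core : forall a b, a <> b -> (forall x, Q x <-> x = a \/ x = b) -> occ n1 a -> False).
  { intros a b Hab HQab' Ho.
    assert (ha : Q (h a)). { rewrite <- hQ. exists a. split; auto. apply HQab'; auto. }
    apply HQab' in ha.
    destruct a as [z|m p e]. apply (occ_base _ _ Ho).
    destruct p as [|x p].
    - apply occ_leaf in Ho. subst m.
      assert (hb : h (lev n1 [] e) = lev n1 [] (negb e)).
      { unfold h, lflip. simpl. rewrite E11. reflexivity. }
      rewrite hb in ha. destruct ha as [ha|ha]. injection ha; destruct e; discriminate.
      apply g1X. apply back; auto. apply lflip_G.
      apply pext. intros y. rewrite (set_act_ext g1 Q _ _ HQab'). rewrite HQab'.
      subst b. unfold g1, lflip. simpl. rewrite E11. simpl. destruct e; simpl; intuition congruence.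
    - set (phi := flip m (x :: p)).
      assert (Hp : x :: p <> []) by discriminate.
      assert (phiE : fixes E phi).
      { intros y Hy. eapply flip_fix_fresh; eauto. apply Hfr; auto. }
      assert (phiX : set_act phi X = X).
      { apply Xs_pres.
        - exists (flipF m (x :: p) N [lev n1 [] false; lev n2 [] false]). intros e'.
          unfold phi. rewrite flip_any. simpl map. rewrite !flip_leaf; auto.
        - exists (flipF m (x :: p) N [lev n1 [] true; lev n2 [] true]). intros e'.
          unfold phi. rewrite flip_any. simpl map. rewrite !flip_leaf; auto. }
      assert (phiQ : set_act phi Q = Q) by (apply key; auto; apply flip_G).
      assert (pa : Q (phi (lev m (x :: p) e))). { rewrite <- phiQ. exists (lev m (x::p) e). split; auto. apply HQab'; auto. }
      apply HQab' in pa. unfold phi in pa. rewrite flip_lev in pa.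
      destruct pa as [pa|pa]. injection pa; destruct e; discriminate.
      subst b. unfold h in ha. rewrite lflip_lev in ha by auto.
      destruct ha as [ha|ha]; [|injection ha; destruct e; discriminate].
      assert (hm : map h (x :: p) = x :: p).
      { exact (f_equal (fun a => match a with lev _ q _ => q | base _ => [] end) ha). }
      destruct (occ_comp _ _ _ _ Hp Ho) as [w [Hw Hwo]].
      apply (lflip_fixed _ w n1 (map_fixed _ _ hm w Hw)); auto.
      rewrite E11; reflexivity. }
  destruct (classic (occ n1 a0 \/ occ n1 b0)) as [[H|H]|H].
  - apply (core a0 b0); auto.
  - apply (core b0 a0); auto. intros x; rewrite HQab; tauto.
  - apply g1X. apply back; auto. apply lflip_G.
    apply pext. intros y. rewrite (set_act_ext g1 Q _ _ HQab). rewrite HQab.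
    unfold g1. rewrite !(lflip_fix _ _); try tauto.
    + intros n Hn1. apply Nat.eqb_eq in Hn1. subst. tauto.
    + intros n Hn1. apply Nat.eqb_eq in Hn1. subst. tauto.
Qed.


Lemma sq_pres pi (q : At * At) : inGfull pi -> sq_mem q -> sq_mem (sq_act pi q).
Proof. intros HG [H1 H2]. split; simpl; apply G_A; auto. Qed.

Lemma seq_pres pi (l : list At) : inGfull pi -> seq_mem l -> seq_mem (seq_act pi l).
Proof.
  intros HG [HA HN]. split.
  - apply Forall_map. eapply Forall_impl; [|exact HA]. intros; apply G_A; auto.
  - unfold seq_act. induction l as [|a l IH]; simpl; constructor.
    + intros Hin. apply in_map_iff in Hin as [y [Ey Hy]].
      inversion HA; inversion HN; subst.
      assert (y = a). { apply (G_inj pi); auto. rewrite Forall_forall in H2; auto. }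
      subst; auto.
    + inversion HA; inversion HN; subst; auto.
Qed.

Lemma N1core (f : At * At -> list At) (E : list At) n1 n2 n3
  (H12 : n1 <> n2) (H13 : n1 <> n3) (H23 : n2 <> n3)
  (Hinj : forall x y, sq_mem x -> sq_mem y -> f x = f y -> x = y)
  (Heqv : forall pi, inGfull pi -> fixes E pi -> forall x, sq_mem x -> f (sq_act pi x) = seq_act pi (f x))
  (Hfr : forall y, In y E -> ~ occ n1 y /\ ~ occ n2 y /\ ~ occ n3 y)
  (a b : At) (Hq : sq_mem (a, b))
  (Ef : f (a, b) = [lev n1 [] false; lev n2 [] false; lev n3 [] false]) : False.
Proof.
  set (s := [lev n1 [] false; lev n2 [] false; lev n3 [] false]) in *.
  assert (key : forall pi, inGfull pi -> fixes E pi -> map pi s = s -> pi a = a /\ pi b = b).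
  { intros pi HG HF Hs. assert (E2 : (pi a, pi b) = (a, b)).
    { apply Hinj; auto. apply (sq_pres pi (a,b)); auto.
      change (pi a, pi b) with (sq_act pi (a, b)). rewrite Heqv, Ef; auto. }
    injection E2; auto. }
  assert (occ2 : forall n, n = n1 \/ n = n2 \/ n = n3 -> occ n a \/ occ n b).
  { intros n Hn. apply NNPP. intros C.
    assert (Hfa : lflip (Nat.eqb n) a = a).
    { apply lflip_fix. intros k Hk. apply Nat.eqb_eq in Hk. subst. tauto. }
    assert (Hfb : lflip (Nat.eqb n) b = b).
    { apply lflip_fix. intros k Hk. apply Nat.eqb_eq in Hk. subst. tauto. }
    assert (HF : fixes E (lflip (Nat.eqb n))).
    { intros y Hy. apply lflip_fix. intros k Hk. apply Nat.eqb_eq in Hk. subst.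
      destruct (Hfr y Hy) as [? [? ?]]. destruct Hn as [->|[->| ->]]; auto. }
    assert (Hs : map (lflip (Nat.eqb n)) s = s).
    { rewrite <- Ef. change (map (lflip (Nat.eqb n)) (f (a,b))) with (seq_act (lflip (Nat.eqb n)) (f (a,b))).
      rewrite <- Heqv; auto. unfold sq_act; simpl. rewrite Hfa, Hfb; auto. apply lflip_G. }
    assert (Hx : In (lev n [] false) s) by (unfold s; simpl; destruct Hn as [->|[->| ->]]; auto).
    pose proof (map_fixed _ _ Hs _ Hx) as Hc. rewrite lflip_leaf, Nat.eqb_refl in Hc. discriminate. }
  assert (core : forall x ni nj, ni <> nj -> (ni = n1 \/ ni = n2 \/ ni = n3) ->
            occ ni x -> occ nj x -> (x = a \/ x = b) -> False).
  { intros x ni nj Hij Hni Hoi Hoj Hx.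
    destruct x as [z|m p e]. apply (occ_base _ _ Hoi).
    destruct p as [|w p].
    - apply occ_leaf in Hoi; apply occ_leaf in Hoj. congruence.
    - assert (Hp : w :: p <> []) by discriminate.
      set (phi := flip m (w :: p)).
      assert (HF : fixes E phi).
      { intros y Hy. apply (flip_fix_fresh ni m (w::p) e y Hp Hoi). destruct (Hfr y Hy) as [? [? ?]].
        destruct Hni as [->|[->| ->]]; auto. }
      assert (Hs : map phi s = s). { unfold s, phi; simpl. rewrite !flip_leaf; auto. }
      destruct (key phi (flip_G _ _) HF Hs) as [Ha Hb].
      assert (Hfx : phi (lev m (w :: p) e) = lev m (w :: p) e) by (destruct Hx as [-> | ->]; auto).
      unfold phi in Hfx. rewrite flip_lev in Hfx. injection Hfx. destruct e; discriminate. }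
  destruct (occ2 n1) as [A1|B1]; auto; destruct (occ2 n2) as [A2|B2]; auto;
  destruct (occ2 n3) as [A3|B3]; auto;
  first [ solve [apply (core a n1 n2); auto]
        | solve [apply (core a n1 n3); auto]
        | solve [apply (core a n2 n3); auto]
        | solve [apply (core b n1 n2); auto]
        | solve [apply (core b n1 n3); auto]
        | solve [apply (core b n2 n3); auto] ].
Qed.


Definition twin (u : At) : At := match u with base z => base z | lev m p e => lev m p (negb e) end.
Definition basename (u : At) : list A0 := match u with base z => [z] | _ => [] end.

Fixpoint words {X : Type} (T : list X) (k : nat) : list (list X) :=
  match k with
  | 0 => [[]]
  | S k' => [] :: flat_map (fun x => map (cons x) (words T k')) T
  end.

Lemma words_in {X : Type} (T : list X) : forall k l, incl l T -> length l <= k -> In l (words T k).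
Proof.
  induction k; intros l Hl Hk; destruct l as [|x l]; simpl in *; auto; try lia.
  right. apply in_flat_map. exists x. split. apply Hl; simpl; auto.
  apply in_map. apply IHk. intros y Hy; apply Hl; simpl; auto. lia.
Qed.

Lemma infinite_fresh (Hinf : ~ exists l : list A0, forall x, In x l) (L : list A0) :
  exists z, ~ In z L.
Proof. apply NNPP. intros C. apply Hinf. exists L. intros x. apply NNPP. intros D. apply C; eauto. Qed.

Lemma P_pair k : pair_mem (Xs (S k) ([] : list At) []).
Proof.
  split.
  - intros x [e [-> | ->]]; exists (S k); apply leaf_A.
  - exists (lev (S k) [] false), (lev (S k) [] true). split. discriminate.
    intros x. unfold Xs. split.
    + intros [[] [-> | ->]]; auto.
    + intros [-> | ->]; eauto.
Qed.

Lemma P_inv pi k : inGfull pi -> set_act pi (Xs (S k) ([] : list At) []) = Xs (S k) [] [].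
Proof.
  intros HG. destruct (G_lev pi (S k) (S k) [] false HG (leaf_A k false)) as [b Hb].
  apply Xs_pres; exists b; intros e; rewrite Hb; reflexivity.
Qed.

Lemma N2core (Hinf : ~ exists l : list A0, forall x, In x l)
  (f : list At -> (At -> Prop)) (E : list At)
  (Hinj : forall x y, seq_mem x -> seq_mem y -> f x = f y -> x = y)
  (Hsurj : forall y, pair_mem y -> exists x, seq_mem x /\ f x = y)
  (Heqv : forall pi, inGfull pi -> fixes E pi -> forall x, seq_mem x -> f (seq_act pi x) = set_act pi (f x))
  : False.
Proof.
  set (T := flat_map (fun y => flat_map (fun u => [u; twin u]) (subs y)) E).
  assert (inT : forall y u, In y E -> In u (subs y) -> In u T /\ In (twin u) T).
  { intros y u Hy Hu. split; apply in_flat_map; exists y; split; auto;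
    apply in_flat_map; exists u; split; simpl; auto. }
  set (W := words T (length T)).
  assert (inW : forall s k, seq_mem s -> f s = Xs (S k) [] [] -> In s W).
  { intros s k Hs Ef.
    assert (fixs : forall pi, inGfull pi -> fixes E pi -> map pi s = s).
    { intros pi HG HF. apply Hinj; auto. apply seq_pres; auto.
      change (map pi s) with (seq_act pi s). rewrite Heqv, Ef; auto. apply P_inv; auto. }
    assert (incl s T).
    { intros x Hx. apply NNPP. intros nT.
      destruct x as [z|m p e].
      - destruct (infinite_fresh Hinf (z :: flat_map basename T)) as [z' Hz'].
        set (sg := fun w => if excluded_middle_informative (w = z) then z'
                            else if excluded_middle_informative (w = z') then z else w).
        assert (sgK : forall w, sg (sg w) = w).
        { intros w. unfold sg.
          destruct (excluded_middle_informative (w = z)) as [->|n1].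
          - destruct (excluded_middle_informative (z' = z)) as [E1|n2]. subst; simpl in Hz'; tauto.
            destruct (excluded_middle_informative (z' = z')); tauto.
          - destruct (excluded_middle_informative (w = z')) as [->|n2].
            + destruct (excluded_middle_informative (z = z)); tauto.
            + destruct (excluded_middle_informative (w = z)); try tauto.
              destruct (excluded_middle_informative (w = z')); tauto. }
        set (pi := Pi sg (fun _ _ => false)).
        assert (HG : inGfull pi) by (apply (Pi_G sg sg); auto).
        assert (HF : fixes E pi).
        { intros y Hy. apply Pi_fix. intros [w|m p e] Hu; simpl; auto.
          destruct (inT y _ Hy Hu) as [Hw _]. unfold sg.
          destruct (excluded_middle_informative (w = z)) as [->|]; [tauto|].
          destruct (excluded_middle_informative (w = z')) as [->|]; auto.
          exfalso. apply Hz'. right. apply in_flat_map. exists (base z'); simpl; auto. }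
        pose proof (map_fixed _ _ (fixs pi HG HF) _ Hx) as C. simpl in C.
        injection C. unfold sg. destruct (excluded_middle_informative (z = z)); [|tauto].
        intros ->. simpl in Hz'; tauto.
      - set (phi := flip m p).
        assert (HF : fixes E phi).
        { intros y Hy. apply Pi_fix. intros [w|m' p' e'] Hu; simpl; auto.
          unfold flipF. destruct (excluded_middle_informative (m' = m /\ p' = p)) as [[-> ->]|]; auto.
          destruct (inT y _ Hy Hu) as [H1 H2]. exfalso. apply nT.
          destruct e, e'; simpl in *; auto. }
        pose proof (map_fixed _ _ (fixs phi (flip_G _ _) HF) _ Hx) as C.
        unfold phi in C. rewrite flip_lev in C. injection C. destruct e; discriminate. }
    apply words_in; auto. apply NoDup_incl_length; auto. apply Hs. }
  assert (build : forall k, exists L, length L = k /\ NoDup L /\ incl L W /\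
                   forall l, In l L -> exists i, i < k /\ f l = Xs (S i) [] []).
  { induction k as [|k [L [HL [HN [HI HF]]]]].
    - exists []. split; [reflexivity|]. split; [constructor|]. split; [intros l []|]. intros l [].
    - destruct (Hsurj _ (P_pair k)) as [s [Hs Ef]].
      exists (s :: L). split; [simpl; auto|]. split; [|split].
      + constructor; auto. intros Hin. destruct (HF s Hin) as [i [Hi Ei]].
        rewrite Ef in Ei.
        assert (C : Xs (S k) ([] : list At) [] (lev (S k) [] false)) by (exists false; auto).
        rewrite Ei in C. destruct C as [e [C|C]]; injection C; intros; lia.
      + intros x [<-|Hx]; auto. eapply inW; eauto.
      + intros l [<-|Hl]. exists k; split; auto.
        destruct (HF l Hl) as [i [Hi Ei]]. exists i; split; auto. }
  destruct (build (S (length W))) as [L [HL [HN [HI _]]]].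
  pose proof (NoDup_incl_length HN HI). lia.
Qed.


Definition lvl (u : At) : nat := match u with base _ => 0 | lev m _ _ => m end.
Definition bnd (E : list At) := fold_right max 0 (map lvl (flat_map subs E)).

Lemma in_max : forall l x, In x l -> x <= fold_right max 0 l.
Proof. induction l; simpl; intros x H; [destruct H|]. destruct H as [<-|H]; [lia|]. specialize (IHl x H). lia. Qed.

Lemma fresh E y n : In y E -> bnd E < n -> ~ occ n y.
Proof.
  intros Hy Hn [e He].
  assert (In (lev n [] e) (flat_map subs E)) by (apply in_flat_map; eauto).
  pose proof (in_max (map lvl (flat_map subs E)) n (in_map lvl _ _ H)). unfold bnd in Hn. simpl in *. lia.
Qed.

Lemma inA_lvl : forall n (a : At), inA n a -> inA (lvl a) a.
Proof.
  induction n; intros a H; [destruct H as [x Hx]; subst a; simpl; eauto|].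
  destruct H as [H|[p [e [-> [Hl Hf]]]]]; auto.
  simpl. right. eauto.
Qed.

Lemma G_lvl pi (a : At) : inGfull pi -> inAll a -> lvl (pi a) = lvl a.
Proof.
  intros HG [n Ha]. destruct a as [z|m p e].
  - destruct HG as [_ HG]. destruct (HG 0) as [H0 _].
    destruct (H0 (base z) (ex_intro _ z eq_refl)) as [x ->]. reflexivity.
  - destruct (G_lev pi n m p e HG Ha) as [b Hb]. rewrite Hb. reflexivity.
Qed.

Lemma leaf_all k e : inAll (lev (S k) ([] : list At) e).
Proof. exists (S k). apply leaf_A. Qed.

Lemma I1 : V_inj (@sq_mem A0) (@sq_act A0) (@seq_mem A0) (@seq_act A0).
Proof.
  exists (fun q => if excluded_middle_informative (fst q = snd q) then [fst q] else [fst q; snd q]), [].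
  split; [constructor|]. split; [|split].
  - intros [a b] [Ha Hb]; simpl in *.
    destruct (excluded_middle_informative (a = b)).
    + split. repeat constructor; auto. repeat constructor. intros [].
    + split. repeat constructor; auto. constructor. intros [->|[]]; auto. repeat constructor. intros [].
  - intros [a b] [a' b'] _ _; simpl.
    destruct (excluded_middle_informative (a = b)), (excluded_middle_informative (a' = b'));
      intros E; injection E; intros; subst; auto; discriminate.
  - intros pi HG _ [a b] [Ha Hb]. simpl.
    destruct (excluded_middle_informative (pi a = pi b)) as [e2|n2];
    destruct (excluded_middle_informative (a = b)) as [e1|n1]; auto.
    + exfalso; apply n1. apply (G_inj pi); auto.
    + subst b. tauto.
Qed.

Definition pf (s : list At) : At -> Prop :=
  Xs (S (max (length s) (fold_right max 0 (map lvl s)))) s s.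

Lemma I2 : V_inj (@seq_mem A0) (@seq_act A0) (@pair_mem A0) (@set_act A0).
Proof.
  exists pf, []. split; [constructor|]. split; [|split].
  - intros s [HA HN]. set (K := max (length s) (fold_right max 0 (map lvl s))).
    assert (Hin : forall e, inAll (lev (S K) s e)).
    { intros e. exists (S K). simpl. right. exists s, e. split; auto. split. unfold K; lia.
      rewrite Forall_forall in *. intros a Ha. destruct (HA a Ha) as [n Hn].
      apply (inA_mono (lvl a)); [|eapply inA_lvl; eauto].
      pose proof (in_max _ _ (in_map lvl _ _ Ha)). unfold K. lia. }
    split.
    + intros x [e [-> | ->]]; auto.
    + exists (lev (S K) s false), (lev (S K) s true). split. intros E; injection E; discriminate.
      intros x. unfold pf, Xs. fold K. split.
      * intros [[] [-> | ->]]; auto.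
      * intros [-> | ->]; eauto.
  - intros s s' _ _ E. unfold pf in E.
    assert (C : Xs (S (max (length s) (fold_right max 0 (map lvl s)))) s s
               (lev (S (max (length s) (fold_right max 0 (map lvl s)))) s false)) by (exists false; auto).
    rewrite E in C. destruct C as [e [C|C]]; injection C; auto.
  - intros pi HG _ s [HA HN]. unfold pf, seq_act.
    assert (El : map lvl (map pi s) = map lvl s).
    { rewrite map_map. apply map_ext_in. intros a Ha. apply G_lvl; auto. rewrite Forall_forall in HA; auto. }
    rewrite El, length_map.
    set (K := max (length s) (fold_right max 0 (map lvl s))).
    assert (Hin : inA (S K) (lev (S K) s false)).
    { simpl. right. exists s, false. split; auto. split. unfold K; lia.
      rewrite Forall_forall in *. intros a Ha. destruct (HA a Ha) as [n Hn].
      apply (inA_mono (lvl a)); [|eapply inA_lvl; eauto].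
      pose proof (in_max _ _ (in_map lvl _ _ Ha)). unfold K. lia. }
    destruct (G_lev pi _ _ _ _ HG Hin) as [b Hb].
    apply pext. intros x. unfold set_act, Xs. split.
    + intros [e [-> | ->]]; exists (lev (S K) s (xorb b e)); split; eauto;
      rewrite Hb; f_equal; destruct b, e; auto.
    + intros [y [[e [-> | ->]] <-]]; rewrite Hb; eauto.
Qed.

Lemma I3 : V_inj (@pair_mem A0) (@set_act A0) (@fin_mem A0) (@set_act A0).
Proof.
  exists (fun x => x), []. split; [constructor|]. split; [|split]; auto.
  intros Q [HA [a [b [_ HQ]]]]. split; auto. exists [a; b]. intros x. rewrite HQ. simpl. split; [intros [-> | ->]; auto | intros [<-|[<-|[]]]; auto].
Qed.

End S.

Lemma lev_A (A0 : Type) k (q : list (atom A0)) e : length q <= S k -> Forall (inA k) q -> inA (S k) (lev (S k) q e).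
Proof. intros. simpl. right. exists q, e. auto. Qed.

Theorem mainTheorem9 (A0 : Type) (A0_infinite : ~ exists l : list A0, forall x, In x l) :
  V_lt (@sq_mem A0) (@sq_act A0) (@seq_mem A0) (@seq_act A0) /\
  V_lt (@seq_mem A0) (@seq_act A0) (@pair_mem A0) (@set_act A0) /\
  V_lt (@pair_mem A0) (@set_act A0) (@fin_mem A0) (@set_act A0).
Proof.
  split; [|split]; split.
  - apply I1.
  - intros [f [E [HE [Hm [Hi [Hs Heqv]]]]]].
    set (B := bnd A0 E).
    assert (s_mem : seq_mem [lev (S B) ([] : list (atom A0)) false; lev (S (S B)) [] false; lev (S (S (S B))) [] false]).
    { split. repeat constructor; apply leaf_all.
      repeat constructor; simpl; intros H; repeat destruct H as [H|H]; try injection H; try lia; auto. }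
    destruct (Hs _ s_mem) as [[a b] [Hq Ef]].
    apply (N1core A0 f E (S B) (S (S B)) (S (S (S B)))) with a b; auto; try lia.
    intros y Hy; repeat split; apply (fresh A0 E y); auto; unfold B; lia.
  - apply I2.
  - intros [f [E [_ [_ [Hi [Hs Heqv]]]]]]. eapply N2core; eauto.
  - apply I3.
  - intros [f [E [_ [_ [Hi [Hs Heqv]]]]]].
    set (B := bnd A0 E).
    set (n1 := S B). set (n2 := S (S B)). set (N := S n2).
    set (q1 := [lev n1 [] false; lev n2 [] false] : list (atom A0)).
    set (q2 := [lev n1 [] true; lev n2 [] true] : list (atom A0)).
    assert (HA : forall q e, (q = q1 \/ q = q2) -> inAll (lev N q e)).
    { intros q e Hq. exists N. apply lev_A.
      destruct Hq as [-> | ->]; simpl; unfold n2; lia.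
      assert (L1 : forall b, inA n2 (lev n1 ([] : list (atom A0)) b)).
      { intros b. apply (inA_mono A0 n1); [unfold n1, n2; lia| apply leaf_A]. }
      assert (L2 : forall b, inA n2 (lev n2 ([] : list (atom A0)) b)) by (intros; apply leaf_A).
      destruct Hq as [-> | ->]; (constructor; [apply L1|constructor; [apply L2|constructor]]). }
    assert (HX : fin_mem (Xs A0 N q1 q2)).
    { split. intros x [e [-> | ->]]; apply HA; auto.
      exists [lev N q1 false; lev N q1 true; lev N q2 false; lev N q2 true].
      intros x. unfold Xs. simpl. split.
      - intros [[] [-> | ->]]; tauto.
      - intros [<-|[<-|[<-|[<-|[]]]]]; eauto. }
    destruct (Hs _ HX) as [Q [HQ EQ]].
    apply (N3core A0 f E n1 n2 N) with Q; auto.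
    intros y Hy; split; apply (fresh A0 E y); auto; unfold B, n1, n2; lia.
Qed.
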